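(* Let $C$ be an $(n,\alpha,v,\rho)$-FR code, let $k\in\{1,\dots,n\}$ and let $M\in\{1,\dots,v\}$ be an integer with $M\le M_k(C)$ (i.e. a file of size $M$ can be stored using $C$ with reconstruction degree $k$). Then $$k\ \ge\ \left\lceil \frac{n\binom{M-1}{\alpha}}{\binom{v}{\alpha}}\right\rceil+1 .$$
   Context: An incidence structure is a triple $(\mathcal P,\mathcal B,\mathcal I)$ with $\mathcal P$ (points) and $\mathcal B$ (blocks) finite sets and $\mathcal I\subseteq \mathcal P\times\mathcal B$; repeated blocks are allowed. An $(n,\alpha,v,\rho)$-FR code is an incidence structure with $|\mathcal B|=n$, $|\mathcal P|=v$, every point incident with exactly $\rho$ blocks and every block incident with exactly $\alpha$ points. The supported file size is $M_k(C)=\min_{\mathcal K\subseteq\mathcal B,|\mathcal K|=k}|\{p\in\mathcal P:\exists B\in\mathcal K,(p,B)\in\mathcal I\}|$. Binomial coefficients $\binom{a}{b}$ are $0$ when $a<b$. *)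

(* Defs.v *)
From mathcomp Require Import all_boot.
Set Implicit Arguments. Unset Strict Implicit. Unset Printing Implicit Defensive.

(* An incidence structure with point set 'I_v and block set 'I_n (blocks are
   indexed, so repeated blocks are allowed); I p B means (p,B) is an incidence. *)
Definition is_FR_code (n alpha v rho : nat) (I : 'I_v -> 'I_n -> bool) : Prop :=
  (forall p : 'I_v, #|[set B : 'I_n | I p B]| = rho) /\
  (forall B : 'I_n, #|[set p : 'I_v | I p B]| = alpha).

Definition covered {n v : nat} (I : 'I_v -> 'I_n -> bool) (K : {set 'I_n}) : nat :=
  #|[set p : 'I_v | [exists B in K, I p B]]|.

(* supported file size M_k(C): minimum over k-subsets of blocks of the number of
   covered points (the neutral element v is an upper bound of every term). *)
Definition Mk {n v : nat} (I : 'I_v -> 'I_n -> bool) (k : nat) : nat :=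
  \big[minn/v]_(K : {set 'I_n} | #|K| == k) covered I K.

Definition ceil_div (a b : nat) : nat := (a + b.-1) %/ b.

(* Main.v *)
From mathcomp Require Import all_boot.
From mathcomp Require Import ring zify.
Require Import Defs.
Lemma count_super (T : finType) (A : {set T}) m : #|A| <= m ->
  #|[set S : {set T} | A \subset S & #|S| == m]| = 'C(#|T| - #|A|, m - #|A|).
Proof.
move=> hAm.
have -> : #|T| - #|A| = #|~: A| by rewrite -(cardsC A) addKn.
rewrite -cards_draws.
set D := [set S : {set T} | A \subset S & #|S| == m].
have inj : {in D &, injective (fun S => S :\: A)}.
  move=> S1 S2; rewrite /D !inE; move=> /andP[h1 _] /andP[h2 _] e.
  have K (S : {set T}) : A \subset S -> A :|: S :\: A = S by move=> h; rewrite -{2}(setID S A) (setIidPr h).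
  by rewrite -(K _ h1) -(K _ h2) e.
rewrite -(card_in_imset inj); apply: eq_card => B; rewrite inE.
apply/imsetP/andP.
  case=> S; rewrite /D inE => /andP[hS /eqP hc] ->; split.
    by rewrite setDE setIC subsetIl.
  rewrite cardsD (setIidPr hS) hc //.
case=> hB /eqP hc; exists (A :|: B); last first.
  apply/setP=> x; rewrite !inE; case: (boolP (x \in A)) => xA /=.
    by apply/negbTE/negP => xB; move: (subsetP hB x xB); rewrite inE xA.
  by [].
rewrite inE subsetUl /= cardsU.
have -> : A :&: B = set0.
  apply/setP=> x; rewrite !inE; apply/negP=> /andP[xA xB].
  by move: (subsetP hB x xB); rewrite inE xA.
by rewrite cards0 subn0 hc subnKC.
Qed.
Lemma bin_id v m a : a <= m -> m <= v ->
  'C(v - a, m - a) * 'C(v, a) = 'C(v, m) * 'C(m, a).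
Proof.
move=> ham hmv.
have F : 0 < a`! * (m - a)`! * (v - m)`! by rewrite !muln_gt0 !fact_gt0.
apply/eqP; rewrite -(eqn_pmul2r F); apply/eqP.
have hav : a <= v by apply: leq_trans hmv.
have e1 : v - a - (m - a) = v - m by rewrite subnBA // subnK.
have L : 'C(v - a, m - a) * 'C(v, a) * (a`! * (m - a)`! * (v - m)`!)
   = ('C(v - a, m - a) * ((m - a)`! * (v - a - (m - a))`!)) * 'C(v, a) * a`!.
  by rewrite e1; ring.
have R : 'C(v, m) * 'C(m, a) * (a`! * (m - a)`! * (v - m)`!)
   = ('C(m, a) * (a`! * (m - a)`!)) * 'C(v, m) * (v - m)`!.
  by ring.
rewrite L R !bin_fact ?leq_sub2r //.
have -> : (v - a)`! * 'C(v, a) * a`! = v`! by rewrite -(bin_fact hav); ring.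
by rewrite -(bin_fact hmv); ring.
Qed.

Lemma big_minn_le (T : eqType) (r : seq T) (P : pred T) (F : T -> nat) x j :
  j \in r -> P j -> \big[minn/x]_(i <- r | P i) F i <= F j.
Proof.
elim: r => // a r IH; rewrite inE big_cons => /orP [/eqP <- Pj | jr Pj].
  by rewrite Pj geq_minl.
case: (P a); last exact: IH.
exact: leq_trans (geq_minr _ _) (IH jr Pj).
Qed.

Theorem theorem2 (n alpha v rho : nat) (I : 'I_v -> 'I_n -> bool)
    (hC : @is_FR_code n alpha v rho I) (k M : nat)
    (hk1 : 1 <= k) (hkn : k <= n) (hM1 : 1 <= M) (hMv : M <= v)
    (hMk : M <= Mk I k) :
  ceil_div (n * 'C(M.-1, alpha)) 'C(v, alpha) + 1 <= k.
Proof.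
set m := M.-1.
have hmM : M = m.+1 by rewrite /m prednK.
have [lt_m_a | le_a_m] := ltnP m alpha.
  rewrite bin_small // muln0 /ceil_div add0n.
  case: (posnP 'C(v, alpha)) => [-> //|hb].
  by rewrite divn_small ?add0n // prednK.
have hmv : m <= v by rewrite -ltnS -hmM ltnW.
have hav : alpha <= v by apply: leq_trans hmv.
have hb : 0 < 'C(v, alpha) by rewrite bin_gt0.
pose blk (B : 'I_n) := [set p : 'I_v | I p B].
have hblk B : #|blk B| = alpha by case: hC => _ ->.
pose t (S : {set 'I_v}) := #|[set B : 'I_n | blk B \subset S]|.
pose D := [set S : {set 'I_v} | #|S| == m].
have tE S : t S = \sum_(B < n) (blk B \subset S : nat).
  rewrite /t -sum1_card big_mkcond /=; apply: eq_bigr => B _.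
  by rewrite inE; case: (blk B \subset S).
have cnt B : \sum_(S in D) (blk B \subset S : nat) = 'C(v - alpha, m - alpha).
  have h := @count_super _ (blk B) m; rewrite hblk card_ord in h; rewrite -(h le_a_m) -sum1_card.
  rewrite big_mkcond [RHS]big_mkcond /=; apply: eq_bigr => S _.
  rewrite /D !inE andbC; by case: (blk B \subset S); case: (#|S| == m).
have St : \sum_(S in D) t S = n * 'C(v - alpha, m - alpha).
  under eq_bigr do rewrite tE.
  rewrite exchange_big /=.
  under eq_bigr do rewrite cnt.
  by rewrite sum_nat_const card_ord.
have cD : #|D| = 'C(v, m) by rewrite /D card_draws card_ord.
have [S hS hSt] : exists2 S, S \in D & n * 'C(m, alpha) <= t S * 'C(v, alpha).
  case: (boolP [exists S in D, n * 'C(m, alpha) <= t S * 'C(v, alpha)]).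
    by case/existsP => S /andP[h1 h2]; exists S.
  move=> nE; exfalso.
  have H S : S \in D -> t S * 'C(v, alpha) + 1 <= n * 'C(m, alpha).
    move=> hS; rewrite addn1 ltnNge; apply/negP => h; apply: (negP nE).
    by apply/existsP; exists S; rewrite hS h.
  have := @leq_sum _ (index_enum _) (fun S => S \in D) (fun S => t S * 'C(v,alpha) + 1) (fun=> n * 'C(m, alpha)) H.
  rewrite sum_nat_const big_split /= sum1_card -big_distrl /= St cD.
  rewrite -mulnA bin_id // => h.
  have : 0 < 'C(v, m) by rewrite bin_gt0.
  move: h; rewrite mulnCA; lia.
have htk : t S < k.
  rewrite ltnNge; apply/negP => hkt.
  have : 0 < #|[set K : {set 'I_n} | K \subset [set B : 'I_n | blk B \subset S] & #|K| == k]|.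
    by rewrite cards_draws bin_gt0.
  rewrite card_gt0 => /set0Pn [K]; rewrite inE => /andP[hK hKk].
  have h1 : Mk I k <= covered I K by rewrite /Mk; apply: big_minn_le; rewrite ?mem_index_enum.
  have h2 : covered I K <= #|S|.
    apply: subset_leq_card; apply/subsetP => p; rewrite inE.
    case/existsP => B /andP[BK IpB].
    have := subsetP hK B BK; rewrite inE => /subsetP; apply.
    by rewrite inE.
  move: hS; rewrite /D inE => /eqP hS.
  have := leq_trans hMk (leq_trans h1 h2); rewrite hS hmM ltnn //.
rewrite addn1; apply: leq_trans htk; rewrite ltnS /ceil_div.
rewrite -ltnS ltn_divLR //.
move: hSt; set a := n * _; set b := 'C(v, alpha); move: hb; lia.
Qed.
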